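(* Let $a,b$ be positive integers with $\gcd(a,b)=1$. For all $\pi\in\mathcal{D}_{b,-a}(a,b)$, $\mathrm{word}(\widetilde{\rho}\circ\tilde f(\pi))=\mathrm{sw}^+_{b,-a}\circ\mathrm{rev}(\mathrm{word}(\pi))$.
   Context: Partitions are drawn in English convention in the first quadrant; a partition with at most $a$ parts, each at most $b$, has as frontier a lattice path from $(0,0)$ to $(b,a)$ with unit north (N) and east (E) steps, its diagram being the unit squares above and to the left of the path; $\mathrm{word}(\lambda)\in\{\mathrm{N},\mathrm{E}\}^*$ is the word of this frontier path. $\mathrm{rev}$ reverses a word. For a word $u$ with finitely many N's, $\mathrm{ptn}(u)$ is the partition whose parts are, for each N of $u$, the number of E's preceding it. The $(b,-a)$-level of a lattice point $(x,y)$ is $by-ax$; a unit square $[x,x+1]\times[y,y+1]$ has the level of its southeast corner. Under the west-south convention, a step of a path gets the level of its starting point. $\mathcal{D}_{b,-a}(a,b)$ is the set of partitions fitting in the $a\times b$ rectangle whose frontier path visits only points of nonnegative level. For $\pi\in\mathcal{D}_{b,-a}(a,b)$ let $L(\pi)$ be the set of levels of unit squares lying above the line $by=ax$ and below the frontier path of $\pi$. Let $z=z_0z_1z_2\cdots$ with $z_0=\mathrm{E}$ and, for $i>0$, $z_i=\mathrm{N}$ if $i\in L(\pi)$ and $z_i=\mathrm{E}$ otherwise; $\tilde f(\pi)=\mathrm{ptn}(z)$. Let $y$ be the subword of $z$ consisting of those $z_i$ ($i\ge0$) for which $i+a$ is the west-south level of some step of the frontier path of $\pi$; then $\widetilde\rho(\tilde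 f(\pi))=\mathrm{ptn}(y)$, regarded as a partition fitting in the $a\times b$ rectangle. For a word $w=w_1\cdots w_n$, set $l_0=0$, $l_i=l_{i-1}+b$ if $w_i=\mathrm{N}$, $l_i=l_{i-1}-a$ if $w_i=\mathrm{E}$. $\mathrm{sw}^+_{b,-a}(w)$ is obtained by: for $k=0,-1,-2,\ldots$ and then $k=\ldots,3,2,1$ (all nonpositive values in decreasing order, then positive values in decreasing order), scan $w$ from left to right appending each $w_i$ ($i\ge1$) with $l_i=k$. *)

(* Defs.v *)
From HB Require Import structures.
From mathcomp Require Import all_boot all_order all_algebra.
Set Implicit Arguments. Unset Strict Implicit. Unset Printing Implicit Defensive.
Import Order.TTheory GRing.Theory Num.Theory.

Inductive step := N | E.
Definition step_eqb (x y : step) :=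
  match x, y with N, N | E, E => true | _, _ => false end.
Lemma step_eqP : Equality.axiom step_eqb.
Proof. by case; case; constructor. Qed.
HB.instance Definition _ := hasDecEq.Build step step_eqP.

Definition is_partition (l : seq nat) : bool :=
  sorted geq l && all (fun p => 0 < p) l.
Definition fits (a b : nat) (l : seq nat) : bool :=
  (size l <= a) && all (fun p => p <= b) l.

Definition Npos (u : seq step) : seq nat :=
  [seq i <- iota 0 (size u) | nth E u i == N].

Definition Ebefore (u : seq step) (j : nat) : nat :=
  count_mem E (take (nth 0 (Npos u) j) u).

Definition ptn (u : seq step) : seq nat :=
  sort geq [seq p <- [seq Ebefore u j | j <- iota 0 (size (Npos u))] | 0 < p].

(* word(lambda) for lambda viewed inside the a x b rectangle: the frontier
   path from (0,0) to (b,a); the row at height y has (y-th smallest, padded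
   by zeros to a rows) part many E's before its N. *)
Fixpoint build_path (b prev : nat) (qs : seq nat) : seq step :=
  match qs with
  | [::] => nseq (b - prev) E
  | q :: qs' => nseq (q - prev) E ++ N :: build_path b q qs'
  end.
Definition word (a b : nat) (l : seq nat) : seq step :=
  let ps := sort leq [seq p <- l | 0 < p] in
  build_path b 0 (nseq (a - size ps) 0 ++ ps).

Definition lvl (a b : nat) (w : seq step) (i : nat) : int :=
  ((Posz (b * count_mem N (take i w))) - (Posz (a * count_mem E (take i w))))%R.

Definition inD (a b : nat) (pi : seq nat) : bool :=
  [&& is_partition pi, fits a b pi &
      all (fun i => (0 <= lvl a b (word a b pi) i)%R) (iota 0 (a + b).+1)].

(* L(pi): levels of unit squares [x,x+1]x[y,y+1] of the rectangle lying above
   the line by = ax (level of SE corner >= 0) and below the frontier path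
   (x >= number of E's before the N step at height y). *)
Definition Lset (a b : nat) (pi : seq nat) : seq int :=
  let w := word a b pi in
  flatten [seq [seq ((Posz (b * y)) - (Posz (a * x.+1)))%R
     | x <- iota 0 b
     & (Ebefore w y <= x) && (0 <= (Posz (b * y)) - (Posz (a * x.+1)))%R]
     | y <- iota 0 a].

Definition zword (a b : nat) (pi : seq nat) (i : nat) : step :=
  if i == 0 then E else if (Posz i \in Lset a b pi) then N else E.

(* f~(pi) = ptn(z); all N's of z have index <= a*b, so a finite prefix suffices *)
Definition f_tilde (a b : nat) (pi : seq nat) : seq nat :=
  ptn [seq zword a b pi i | i <- iota 0 (a * b).+1].

Definition step_levels (a b : nat) (pi : seq nat) : seq int :=
  let w := word a b pi in [seq lvl a b w j | j <- iota 0 (size w)].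

(* the subword y of z: the z_i with i + a a step level (such i are <= a*b) *)
Definition yword (a b : nat) (pi : seq nat) : seq step :=
  [seq zword a b pi i | i <- iota 0 (a * b).+1
     & (Posz (i + a)) \in step_levels a b pi].

Definition rho_f_tilde (a b : nat) (pi : seq nat) : seq nat := ptn (yword a b pi).

(* sw^+_{b,-a}(w): levels l_i lie in [-a*n, b*n], n = size w *)
Definition sw_plus (a b : nat) (w : seq step) : seq step :=
  let n := size w in
  let pick (k : int) := [seq nth E w i.-1 | i <- iota 1 n & lvl a b w i == k] in
  flatten [seq pick (- Posz j)%R | j <- iota 0 (a * n).+1] ++
  flatten [seq pick (Posz (b * n - j)) | j <- iota 0 (b * n)].

(* Main.v *)
Require Import Defs.
From HB Require Import structures.
From mathcomp Require Import all_boot all_order all_algebra.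
From mathcomp Require Import zify.
Set Implicit Arguments. Unset Strict Implicit. Unset Printing Implicit Defensive.

Definition ebl (u : seq step) := [seq count_mem E (take p u) | p <- Npos u].

Lemma iota1 n : iota 1 n = map succn (iota 0 n).
Proof. by rewrite (iotaDl 1 0); apply: eq_map => i; rewrite add1n. Qed.

Lemma Npos_cons x u :
  Npos (x :: u) = (if x == N then [:: 0] else [::]) ++ map succn (Npos u).
Proof.
rewrite /Npos /= iota1 filter_map /=.
by case: x.
Qed.

Lemma ebl_N u : ebl (N :: u) = 0 :: ebl u.
Proof.
rewrite /ebl Npos_cons /= -map_comp; congr (_ :: _).
Qed.

Lemma ebl_E u : ebl (E :: u) = map succn (ebl u).
Proof.
rewrite /ebl Npos_cons /= -!map_comp.
by apply: eq_map => p /=.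
Qed.

Lemma size_ebl u : size (ebl u) = count_mem N u.
Proof.
elim: u => [|x u IH]; first by [].
by case: x; [rewrite ebl_N /= IH | rewrite ebl_E size_map IH].
Qed.

Lemma sorted_ebl u : sorted leq (ebl u).
Proof.
elim: u => [|x u IH]; first by [].
case: x; rewrite ?ebl_N ?ebl_E.
- by move: IH; case: (ebl u).
- by rewrite sorted_map.
Qed.

Lemma build_E B c l : c < B ->
  build_path B c (map (addn c.+1) l) = E :: build_path B c.+1 (map (addn c.+1) l).
Proof.
move=> hc; case: l => [|x l] /=.
- by have -> : B - c = (B - c.+1).+1 by lia.
- have -> : c.+1 + x - c = (c.+1 + x - c.+1).+1 by lia.
  by [].
Qed.

Lemma build_ebl u B c : c + count_mem E u <= B ->
  build_path B c (map (addn c) (ebl u)) = u ++ nseq (B - c - count_mem E u) E.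
Proof.
elim: u c => [|x u IH] c /=.
- by move=> _; rewrite subn0.
case: x => h.
- rewrite ebl_N /= addn0 subnn /=; congr (_ :: _).
  by rewrite IH.
- rewrite ebl_E -map_comp; rewrite /= in h *.
  have -> : [seq (addn c \o succn) x | x <- ebl u] = map (addn c.+1) (ebl u).
    by apply: eq_map => p /=; rewrite addnS addSn.
  rewrite build_E; last by lia.
  rewrite IH; last by move: h; set k := count _ u => h; lia.
  congr (_ :: _ ++ _); congr nseq; move: h; set k := count _ u => h; lia.
Qed.

Lemma build_nseq0 B m l : build_path B 0 (nseq m 0 ++ l) = nseq m N ++ build_path B 0 l.
Proof. by elim: m => [|m IH] //=; rewrite IH. Qed.

Lemma nseq_cons_shift T k (x : T) l : nseq k x ++ x :: l = nseq k.+1 x ++ l.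
Proof. by elim: k => //= k ->. Qed.

Lemma pad_filter a l : sorted leq l -> size l <= a ->
  nseq (a - size [seq p <- l | 0 < p]) 0 ++ [seq p <- l | 0 < p] = nseq (a - size l) 0 ++ l.
Proof.
elim: l a => [|x l IH] a //= hs hsz.
have hs' : sorted leq l by exact: path_sorted hs.
case: x hs => [|x] hs /=.
- rewrite IH //; last by lia.
  rewrite nseq_cons_shift; congr (nseq _ _ ++ _); lia.
- suff -> : [seq p <- l | 0 < p] = l by [].
  apply/all_filterP; move: hs; rewrite (path_sortedE leq_trans) => /andP[hall _].
  by apply: sub_all hall => y /=; lia.
Qed.

Lemma wordW a b u : count_mem E u = b -> count_mem N u <= a ->
  word a b (ptn u) = nseq (a - count_mem N u) N ++ u.
Proof.
move=> hE hN.
have hptn : ptn u = sort geq [seq p <- ebl u | 0 < p].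
  rewrite /ptn; congr (sort _ [seq p <- _ | _]).
  rewrite /ebl -(mkseq_nth 0 (Npos u)) /mkseq -map_comp size_map size_iota.
  by apply: eq_map => j.
rewrite /word hptn filter_sort; [|exact: (fun x y => leq_total y x)|exact: (fun x y z h1 h2 => leq_trans h2 h1)].
rewrite -filter_predI.
have -> : [seq x <- ebl u | predI (fun p => 0 < p) (fun p => 0 < p) x] = [seq p <- ebl u | 0 < p].
  by apply: eq_filter => x /=; rewrite andbb.
have -> : sort leq (sort geq [seq p <- ebl u | 0 < p]) = [seq p <- ebl u | 0 < p].
  apply: (sorted_eq leq_trans anti_leq); first exact: (sort_sorted leq_total).
  - exact: (sorted_filter leq_trans _ (sorted_ebl u)).
  - by rewrite perm_sort perm_sort.
rewrite pad_filter ?sorted_ebl ?size_ebl // build_nseq0.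
have := @build_ebl u b 0.
rewrite (@eq_map _ _ _ id) ?map_id; last by move=> x; rewrite add0n.
move=> ->; last by rewrite add0n hE.
by rewrite hE subn0 subnn cats0.
Qed.
Lemma countNE (s : seq step) : count_mem E s + count_mem N s = size s.
Proof.
elim: s => [|x s IH] //; move: IH.
case: x => /=; set k1 := count _ s; set k2 := count _ s; lia.
Qed.

Lemma countS (w : seq step) c p : p < size w ->
  count_mem c (take p.+1 w) = count_mem c (take p w) + (nth E w p == c).
Proof. by move=> hp; rewrite (take_nth E hp) -cats1 count_cat /= addn0. Qed.

Lemma count_mono (w : seq step) c p q : p <= q ->
  count_mem c (take p w) <= count_mem c (take q w).
Proof.
move=> hpq; rewrite -(subnKC hpq) takeD count_cat; exact: leq_addr.
Qed.

Lemma count_take_all (w : seq step) c p : count_mem c (take p w) <= count_mem c w.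
Proof. by rewrite -{2}(cat_take_drop p w) count_cat leq_addr. Qed.

Lemma count_iota_take (w : seq step) c p : p <= size w ->
  count (fun i => nth E w i == c) (iota 0 p) = count_mem c (take p w).
Proof. by move=> hp; rewrite -(map_nth_iota0 E hp) count_map. Qed.

Lemma NF1 (P : pred nat) m k : k < count P (iota 0 m) ->
  let q := nth 0 [seq i <- iota 0 m | P i] k in
  [/\ q < m, P q & count P (iota 0 q) = k].
Proof.
elim: m k => [|m IH] k; first by [].
rewrite -[m.+1]addn1 iotaD add0n count_cat filter_cat /= addn0 => hk.
rewrite nth_cat size_filter.
case: (ltnP k (count P (iota 0 m))) => hkm.
- by case: (IH k hkm) => h1 h2 h3; split => //; lia.
- case hPm : (P m) hk => /= hk; last by lia.
  have -> : k = count P (iota 0 m) by lia.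
  by rewrite subnn /=; split => //; lia.
Qed.

Lemma NF2 (P : pred nat) m p : P p -> p < m ->
  nth 0 [seq i <- iota 0 m | P i] (count P (iota 0 p)) = p.
Proof.
move=> hP hpm.
have -> : m = p + (1 + (m - p.+1)) by lia.
rewrite iotaD filter_cat nth_cat size_filter ltnn subnn add0n iotaD /= hP /=.
by [].
Qed.

Lemma COP a b y1 y2 x1 x2 : 0 < a -> coprime a b ->
  b * y1 + a * x2 = b * y2 + a * x1 -> y1 <= y2 -> y2 <= y1 + a ->
  y2 = y1 \/ y2 = y1 + a.
Proof.
move=> ha hab he h1 h2.
have hd : b * (y2 - y1) = a * (x2 - x1).
  rewrite !mulnBr; lia.
have : a %| b * (y2 - y1) by rewrite hd dvdn_mulr.
rewrite Gauss_dvdr // => /dvdnP [k hk].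
case: k hk => [|[|k]] hk; [left | right | exfalso]; nia.
Qed.

Lemma filter_nil (T : eqType) (P : pred T) (s : seq T) : (forall x, x \in s -> ~~ P x) -> [seq x <- s | P x] = [::].
Proof.
elim: s => [|x s IH] //= h.
rewrite (negbTE (h x (mem_head _ _))) IH // => y hy.
by apply: h; rewrite in_cons hy orbT.
Qed.

Lemma flatten_nil T (S : eqType) (f : S -> seq T) (s : seq S) :
  (forall x, x \in s -> f x = [::]) -> flatten (map f s) = [::].
Proof.
elim: s => [|x s IH] //= h.
rewrite (h x (mem_head _ _)) IH // => y hy.
by apply: h; rewrite in_cons hy orbT.
Qed.

Lemma filter_as_flatten T S (F : S -> T) (P : pred S) s :
  [seq F x | x <- s & P x] = flatten [seq (if P x then [:: F x] else [::]) | x <- s].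
Proof. by elim: s => [|x s IH] //=; case: (P x) => /=; rewrite IH. Qed.

Lemma perm_levels (f : nat -> nat) (s : seq nat) K :
  perm_eq (flatten [seq [seq x <- s | f x == j] | j <- iota 0 K]) [seq x <- s | f x < K].
Proof.
elim: K => [|K IH].
  by rewrite /= filter_nil.
rewrite -addn1 iotaD map_cat flatten_cat /= cats0 add0n.
apply: (@perm_trans _ ([seq x <- s | f x < K] ++ [seq x <- s | f x == K])).
  by rewrite perm_cat2r.
apply/permP => c; rewrite count_cat !count_filter addn1.
elim: s {IH} => [|x s IH] //=.
rewrite ltnS.
case: (ltngtP (f x) K) => h /=; rewrite ?andbF ?andbT; rewrite -IH; case: (c x) => /=; lia.
Qed.

Lemma iota_rev_filter T (F : nat -> T) (P : pred nat) n :
  [seq F i | i <- iota 1 n & P i] = rev [seq F (n - p) | p <- iota 0 n & P (n - p)].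
Proof.
elim: n => [|n IH] //.
have -> : iota 1 n.+1 = iota 1 n ++ [:: n.+1] by rewrite -{1}[n.+1]addn1 iotaD add1n.
rewrite filter_cat map_cat IH.
have -> : iota 0 n.+1 = 0 :: map succn (iota 0 n) by rewrite /= iota1.
rewrite /= filter_map subn0.
have E1 : [seq F (n.+1 - p) | p <- [seq i.+1 | i <- iota 0 n & preim succn (fun p => P (n.+1 - p)) i]]
   = [seq F (n - p) | p <- iota 0 n & P (n - p)].
  rewrite -map_comp; congr map.
case: (P n.+1).
- by rewrite /= E1 rev_cons cats1 subn0.
- by rewrite E1 cats0.
Qed.
Lemma count_build_N B c qs : count_mem N (build_path B c qs) = size qs.
Proof.
elim: qs c => [|q qs IH] c /=; first by rewrite count_nseq /= mul0n.
by rewrite count_cat count_nseq /= IH mul0n.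
Qed.

Lemma count_build_E B c qs : path leq c qs -> all (fun q => q <= B) qs -> c <= B ->
  count_mem E (build_path B c qs) = B - c.
Proof.
elim: qs c => [|q qs IH] c /= hp ha hc; first by rewrite count_nseq /= mul1n.
case/andP: hp => h1 h2; case/andP: ha => h3 h4.
rewrite count_cat count_nseq /= mul1n IH //; lia.
Qed.

Lemma path0 s : path leq 0 s = sorted leq s.
Proof. by case: s. Qed.

Lemma sorted_pad m s : sorted leq s -> sorted leq (nseq m 0 ++ s).
Proof. by move=> hs; elim: m => [|m IH] //=; rewrite path0. Qed.

Lemma word_counts a b pi : fits a b pi ->
  count_mem N (word a b pi) = a /\ count_mem E (word a b pi) = b.
Proof.
case/andP => hsz hall.
rewrite /word; set ps := sort leq [seq p <- pi | 0 < p].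
have hps : size ps <= a.
  rewrite size_sort size_filter; apply: leq_trans (count_size _ _) hsz.
split.
  by rewrite count_build_N size_cat size_nseq; lia.
rewrite count_build_E ?subn0 //.
- by rewrite path0; apply: sorted_pad; exact: (sort_sorted leq_total).
- rewrite all_cat all_nseq leq0n orbT /= all_sort.
  by apply/allP => x; rewrite mem_filter => /andP[_ hx]; exact: (allP hall).
Qed.

Definition Xw (w : seq step) p := count_mem E (take p w).
Definition Yw (w : seq step) p := count_mem N (take p w).

Lemma lvlE a b w p : lvl a b w p = (Posz (b * Yw w p) - Posz (a * Xw w p))%R.
Proof. by []. Qed.

Lemma XY w p : p <= size w -> Xw w p + Yw w p = p.
Proof. by move=> hp; rewrite /Xw /Yw countNE size_take_min; lia. Qed.

Lemma lvl_inj a b w : 0 < a -> coprime a b -> count_mem N w = a -> count_mem E w = b ->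
  forall p q, p < size w -> q < size w -> lvl a b w p = lvl a b w q -> p = q.
Proof.
move=> ha hab hN hE.
have hsz : size w = a + b by rewrite -countNE hN hE addnC.
suff H : forall p q, p <= q -> p < size w -> q < size w -> lvl a b w p = lvl a b w q -> p = q.
  move=> p q hp hq hl; case: (leqP p q) => h; first exact: H.
  by apply/esym; apply: H => //; exact: ltnW.
move=> p q hpq hp hq; rewrite !lvlE => hl.
have h1 := XY (ltnW hp); have h2 := XY (ltnW hq).
have m1 : Xw w p <= Xw w q by exact: count_mono.
have m2 : Yw w p <= Yw w q by exact: count_mono.
have m3 : Yw w q <= a by rewrite -hN; exact: count_take_all.
have he : b * Yw w p + a * Xw w q = b * Yw w q + a * Xw w p by lia.
have hc : Yw w q <= Yw w p + a by lia.
case: (COP ha hab he m2 hc) => hY.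
- have hX : a * Xw w q = a * Xw w p by rewrite hY in he; lia.
  have : Xw w q = Xw w p by apply/eqP; rewrite -(eqn_pmul2l ha); apply/eqP.
  lia.
- have hX : a * Xw w q = a * (b + Xw w p) by rewrite hY in he; lia.
  have : Xw w q = b + Xw w p by apply/eqP; rewrite -(eqn_pmul2l ha); apply/eqP.
  lia.
Qed.

Lemma XS_N w p : p < size w -> nth E w p = N -> Xw w p.+1 = Xw w p /\ Yw w p.+1 = (Yw w p).+1.
Proof. by move=> hp hc; rewrite /Xw /Yw !countS // hc /=; split; lia. Qed.

Lemma XS_E w p : p < size w -> nth E w p = E -> Xw w p.+1 = (Xw w p).+1 /\ Yw w p.+1 = Yw w p.
Proof. by move=> hp hc; rewrite /Xw /Yw !countS // hc /=; split; lia. Qed.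

Lemma Npos_nth_Y w p : p < size w -> nth E w p = N -> nth 0 (Npos w) (Yw w p) = p.
Proof.
move=> hp hc; rewrite /Npos /Yw -count_iota_take ?(ltnW hp) //.
by rewrite NF2 // hc.
Qed.

Lemma key a b pi p i : 0 < a -> 0 < b -> coprime a b ->
  count_mem N (word a b pi) = a -> count_mem E (word a b pi) = b ->
  p < size (word a b pi) -> lvl a b (word a b pi) p = Posz (i + a) ->
  nth E (word a b pi) p = zword a b pi i.
Proof.
move=> ha hb hab hN hE; set w := word a b pi => hp hl.
rewrite lvlE in hl.
have hXY := XY (ltnW hp).
have hYn : Yw w (size w) = a by rewrite /Yw take_size.
have hXn : Xw w (size w) = b by rewrite /Xw take_size.
have hYm : Yw w p.+1 <= a by rewrite -hYn; exact: count_mono.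
have hXm : Xw w p.+1 <= b by rewrite -hXn; exact: count_mono.
case hc : (nth E w p).
- case: (XS_N hp hc) => hX1 hY1.
  have he : b * Yw w p = i + a + a * Xw w p by lia.
  rewrite /zword; case: eqP => [hi0|hi0].
    exfalso.
    have he2 : b * 0 + a * (Xw w p).+1 = b * Yw w p + a * 0 by lia.
    case: (COP ha hab he2 (leq0n _) _); [lia | nia | lia].
  suff -> : Posz i \in Lset a b pi by [].
  rewrite /Lset -/w; apply/flatten_mapP; exists (Yw w p).
    rewrite mem_iota; lia.
  apply/mapP; exists (Xw w p).
    rewrite mem_filter mem_iota /Ebefore -/(Yw w _) Npos_nth_Y // -/(Xw w p) leqnn /=.
    apply/andP; split; first by lia.
    nia.
  lia.
- case: (XS_E hp hc) => hX1 hY1.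
  rewrite /zword; case: eqP => // hi0; case: ifP => // hin; exfalso.
  move: hin; rewrite /Lset -/w => /flatten_mapP [y]; rewrite mem_iota => hy.
  case/mapP => x; rewrite mem_filter mem_iota => /andP [/andP [heb hlev] hx] hix.
  have he : b * Yw w p + a * x = b * y + a * Xw w p by lia.
  have [hyY hxX] : y = Yw w p /\ x = Xw w p.
    case: (leqP (Yw w p) y) => hYy.
    + case: (COP ha hab he hYy _); [lia | move=> hyy | lia].
      split => //; rewrite hyy in he.
      by apply/eqP; rewrite -(eqn_pmul2l ha); apply/eqP; lia.
    + have he' : b * y + a * Xw w p = b * Yw w p + a * x by lia.
      case: (COP ha hab he' (ltnW hYy) _); [lia | lia | move=> hYa].
      exfalso.
      have : a * Xw w p = a * (b + x) by lia.
      move/eqP; rewrite eqn_pmul2l // => /eqP; lia.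
  subst y x.
  set q := nth 0 (Npos w) (Yw w p).
  have hcnt : Yw w p < count (fun i => nth E w i == N) (iota 0 (size w)).
    by rewrite count_iota_take // -/(Yw w _) hYn; lia.
  case: (NF1 hcnt) => hq hPq hcq.
  rewrite -/(Npos w) -/q in hq hPq hcq.
  rewrite count_iota_take ?(ltnW hq) // -/(Yw w q) in hcq.
  move: heb; rewrite /Ebefore -/q -/(Xw w q) => heb.
  case: (ltngtP p q) => hpq.
  + have : Xw w p.+1 <= Xw w q by exact: count_mono.
    lia.
  + have [_ hYq] := XS_N hq (eqP hPq).
    have : Yw w q.+1 <= Yw w p by exact: count_mono.
    lia.
  + by move: hPq; rewrite -hpq hc.
Qed.

Import GRing.Theory.

Definition pickw a b (w : seq step) (j : nat) :=
  [seq nth E w p | p <- iota 0 (size w) & lvl a b w p == Posz j].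

Lemma lvl_rev a b w i : count_mem N w = a -> count_mem E w = b -> i <= size w ->
  lvl a b (rev w) i = (- lvl a b w (size w - i))%R.
Proof.
move=> hN hE hi.
rewrite /lvl take_rev !count_rev.
set k := size w - i.
have hdN := cat_take_drop k w.
have h1 : count_mem N (drop k w) + count_mem N (take k w) = a.
  by rewrite -hN -{3}(cat_take_drop k w) count_cat addnC.
have h2 : count_mem E (drop k w) + count_mem E (take k w) = b.
  by rewrite -hE -{3}(cat_take_drop k w) count_cat addnC.
move: h1 h2; clear hdN; move: (count_mem N (drop k w)) (count_mem N (take k w)) (count_mem E (drop k w)) (count_mem E (take k w)) => x y x2 y2 <- <-; lia.
Qed.

Lemma lvl_bounds a b w p : count_mem N w = a -> p <= size w ->
  (lvl a b w p <= Posz (a * b))%R.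
Proof.
move=> hN hp; rewrite lvlE.
have : Yw w p <= a by rewrite -hN; exact: count_take_all.
nia.
Qed.

Lemma FILT a b w j : 0 < a -> coprime a b -> count_mem N w = a -> count_mem E w = b ->
  [seq p <- iota 0 (size w) | lvl a b w p == Posz j] = [::] \/
  exists p, [/\ p < size w, lvl a b w p = Posz j &
     [seq p <- iota 0 (size w) | lvl a b w p == Posz j] = [:: p]].
Proof.
move=> ha hab hN hE.
case: (boolP (has (fun p => lvl a b w p == Posz j) (iota 0 (size w)))).
- case/hasP => p; rewrite mem_iota add0n => /andP [_ hp] /eqP hl.
  right; exists p; split => //.
  rewrite -(filter_pred1_uniq (iota_uniq 0 (size w)) (_ : p \in iota 0 (size w))); last first.
    by rewrite mem_iota.
  apply: eq_in_filter => q; rewrite mem_iota add0n => /andP [_ hq] /=.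
  apply/eqP/eqP => [hq'|->//].
  by apply: (lvl_inj ha hab hN hE hq hp); rewrite hq' hl.
- by rewrite has_filter negbK => /eqP ->; left.
Qed.

Lemma pickw_rev a b w j : 0 < a -> coprime a b -> count_mem N w = a -> count_mem E w = b ->
  rev (pickw a b w j) = pickw a b w j.
Proof.
move=> ha hab hN hE; rewrite /pickw.
by case: (FILT j ha hab hN hE) => [->|[p [_ _ ->]]].
Qed.

Lemma SW1 a b w : 0 < a -> 0 < b -> coprime a b -> count_mem N w = a -> count_mem E w = b ->
  (forall p, p <= size w -> (0 <= lvl a b w p)%R) ->
  sw_plus a b (rev w) = flatten [seq pickw a b w j | j <- iota 0 (a * size w).+1].
Proof.
move=> ha hb hab hN hE hpos.
rewrite /sw_plus size_rev.
rewrite [X in _ ++ X]flatten_nil ?cats0; last first.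
  move=> j; rewrite mem_iota add0n => /andP [_ hj].
  rewrite filter_nil // => i; rewrite mem_iota => /andP [hi1 hi2].
  rewrite lvl_rev //.
  have := hpos (size w - i) (leq_subr _ _).
  move: (lvl a b w (size w - i)) => l hl.
  apply/negP => /eqP hl2.
  have : (0 < Posz (b * size w - j))%R by rewrite ltz_nat; lia.
  rewrite -hl2; lia.
congr flatten; apply: eq_map => j.
rewrite (iota_rev_filter (fun i => nth E (rev w) i.-1) (fun i => lvl a b (rev w) i == (- Posz j)%R)).
rewrite -(pickw_rev j ha hab hN hE); congr rev.
rewrite /pickw.
have -> : [seq p <- iota 0 (size w) | lvl a b (rev w) (size w - p) == (- Posz j)%R]
  = [seq p <- iota 0 (size w) | lvl a b w p == Posz j].
  apply: eq_in_filter => p; rewrite mem_iota add0n => /andP [_ hp].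
  by rewrite lvl_rev ?leq_subr // subKn ?(ltnW hp) // eqr_opp.
apply/eq_in_map => p; rewrite mem_filter mem_iota add0n => /andP [_ /andP [_ hp]].
have hlt : (size w - p).-1 < size w by lia.
rewrite (nth_rev _ hlt); congr nth; lia.
Qed.

Lemma Low a b w p j : (forall p, p <= size w -> (0 <= lvl a b w p)%R) ->
  p < size w -> lvl a b w p = Posz j -> j < a -> nth E w p = N.
Proof.
move=> hpos hp hl hj; case hc : (nth E w p) => //; exfalso.
have [hX hY] := XS_E hp hc.
have := hpos p.+1 hp.
rewrite !lvlE hX hY in hl *; lia.
Qed.

Lemma perm_pick a b w K : count_mem N w = a ->
  (forall p, p <= size w -> (0 <= lvl a b w p)%R) -> a * b < K ->
  perm_eq (flatten [seq pickw a b w j | j <- iota 0 K]) w.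
Proof.
move=> hN hpos hK.
have -> : flatten [seq pickw a b w j | j <- iota 0 K] =
   map (nth E w) (flatten [seq [seq p <- iota 0 (size w) | absz (lvl a b w p) == j] | j <- iota 0 K]).
  rewrite map_flatten -map_comp; congr flatten; apply: eq_map => j /=; rewrite /pickw; congr map.
  apply: eq_in_filter => p; rewrite mem_iota add0n => /andP [_ hp].
  by have := hpos p (ltnW hp); case: (lvl a b w p).
apply: (@perm_trans _ (map (nth E w) [seq x <- iota 0 (size w) | absz (lvl a b w x) < K])).
  exact: perm_map (perm_levels _ _ K).
rewrite (@eq_in_filter _ _ predT); last first.
  move=> p; rewrite mem_iota add0n => /andP [_ hp].
  have := hpos p (ltnW hp); have := @lvl_bounds a b w p hN (ltnW hp).
  case: (lvl a b w p) => // n h1 _ /=; rewrite lez_nat in h1; lia.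
by rewrite filter_predT map_nth_iota0 // take_size.
Qed.

Unset Implicit Arguments.

Theorem mainTheorem7 (a b : nat) (ha : 0 < a) (hb : 0 < b) (hab : coprime a b)
  (pi : seq nat) (hpi : inD a b pi) :
  word a b (rho_f_tilde a b pi) = sw_plus a b (rev (word a b pi)).
Proof.
move: (hpi) => /and3P [_ hfit hlv].
have [hN hE] := word_counts hfit.
have hsz : size (word a b pi) = a + b by rewrite -countNE hN hE addnC.
have hpos : forall p, p <= size (word a b pi) -> (0 <= lvl a b (word a b pi) p)%R.
  by move=> p hp; apply: (allP hlv); rewrite mem_iota; lia.
rewrite SW1 //.
set w := word a b pi in hN hE hsz hpos *.
set D := flatten [seq pickw a b w j | j <- iota 0 a].
have hD : D = nseq (size D) N.
  apply/all_pred1P/allP => x /flatten_mapP [j]; rewrite mem_iota add0n => /andP [_ hj].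
  case/mapP => p; rewrite mem_filter mem_iota add0n => /andP [/eqP hl /andP [_ hp]] ->.
  by rewrite /= (Low hpos hp hl hj).
have Hfull : flatten [seq pickw a b w j | j <- iota 0 (a * size w).+1] = D ++ yword a b pi.
  have hK : (a * size w).+1 = a + ((a*b).+1 + (a * size w - a - a*b)) by rewrite hsz; nia.
  rewrite hK !iotaD !map_cat !flatten_cat.
  rewrite [X in _ ++ (_ ++ X)]flatten_nil ?cats0; last first.
    move=> j; rewrite mem_iota => /andP [hj _].
    rewrite /pickw; case: (FILT j ha hab hN hE) => [->//|[p [hp hl _]]].
    have := @lvl_bounds a b w p hN (ltnW hp); rewrite hl lez_nat; lia.
  rewrite add0n; congr (_ ++ _).
  have -> : iota a (a*b).+1 = map (addn a) (iota 0 (a*b).+1) by rewrite -iotaDl addn0.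
  rewrite /yword filter_as_flatten -map_comp; congr flatten; apply: eq_map => i /=.
  case: (FILT (a + i) ha hab hN hE) => [h0 | [p [hp hl h1]]].
  - rewrite /pickw h0 /=; case: ifP => // hin; exfalso.
    move: hin; rewrite /step_levels -/w => /mapP [p]; rewrite mem_iota add0n => /andP [_ hp] hl.
    have : p \in [seq p <- iota 0 (size w) | lvl a b w p == Posz (a + i)].
      by rewrite mem_filter mem_iota add0n hp -hl addnC eqxx.
    by rewrite h0.
  - rewrite /pickw h1 /=.
    have -> : Posz (i + a) \in step_levels a b pi.
      apply/mapP; exists p; first by rewrite -/w mem_iota add0n leq0n /=.
      by rewrite -/w hl addnC.
    congr [:: _]; apply: key => //; by rewrite -/w hl addnC.
have hperm : perm_eq (D ++ yword a b pi) w.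
  rewrite -Hfull; apply: perm_pick hN hpos _; rewrite hsz; nia.
have hcN : count_mem N (D ++ yword a b pi) = a by rewrite (permP hperm).
have hcE : count_mem E (D ++ yword a b pi) = b by rewrite (permP hperm).
rewrite Hfull /rho_f_tilde wordW; last first.
- by move: hcN; rewrite count_cat; lia.
- by move: hcE; rewrite count_cat hD count_nseq /= mul0n.
rewrite [in RHS]hD; congr (_ ++ _); congr nseq.
move: hcN; rewrite count_cat {1}hD count_nseq /= mul1n; lia.
Qed.
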